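(* Let $r>0$, $\kappa>0$, $\tau>0$, $p\in[0,1]$ with $\varepsilon=pe^{-\tau}<1$, and let $q\in\mathbb{R}$. Let $H:\mathcal{C}\to\mathbb{R}$, \[ H(\phi)=1-\phi_S(0)-\phi_I(-\kappa)+\int_{-\kappa}^{0}\big(1-r\phi_S(s)\big)\phi_I(s)\,ds, \] and $\mathcal{F}_q:=H^{-1}(q)$. Then: (1) $\mathcal{F}_q\cap\mathcal{E}_0=\{\widehat{u(q)}\}$, where $u(q)=(1-q,0,q)$. (2) $\mathcal{F}_q\cap\mathcal{E}_I=\{\widehat{v(q)}\}$, where $v(q)=(v_S,v_I(q),v_Q(q))$ with $v_S=\frac{1}{r(1-\varepsilon)}$, \[ v_I(q)=\frac{1-\varepsilon}{1-\varepsilon+\varepsilon\kappa}(q_c-q),\qquad v_Q(q)=\frac{\varepsilon\kappa}{1-\varepsilon+\varepsilon\kappa}(q_c-q)+q, \] and $q_c=1-\frac{1}{r}\frac{1}{1-\varepsilon}$.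
   Context: $\mathcal{C}=\{\phi\in C([-\tau-\kappa,0],\mathbb{R}^3):\phi_S+\phi_I+\phi_Q\equiv1\}$, the phase space of the SIQ delay system $\dot S=-rSI+I+r\varepsilon (SI)(t-\tau-\kappa)$, $\dot I=rSI-I-r\varepsilon(SI)(t-\tau)$, $\dot Q=r\varepsilon[(SI)(t-\tau)-(SI)(t-\tau-\kappa)]$. For $u\in\mathbb{R}^3$ with $u_1+u_2+u_3=1$, $\hat u$ is the constant function with value $u$. $\mathcal{E}_0=\{\hat\phi\in\mathcal{C}\text{ constant}:\phi_I=0\}$ (disease-free equilibria) and $\mathcal{E}_I=\{\hat\phi\in\mathcal{C}\text{ constant}:\phi_S=\frac{1}{r(1-\varepsilon)}\}$. *)

(* Defs.v *)
From Stdlib Require Import Reals.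
From Coquelicot Require Import Coquelicot.
Open Scope R_scope.

(* An element of C([-tau-kappa,0], R^3), given by its three components.
   Values outside [-tau-kappa,0] are irrelevant; all notions below only
   look at the interval. *)
Record state := mkState { phS : R -> R; phI : R -> R; phQ : R -> R }.

Definition in_dom (tau kappa s : R) : Prop := - tau - kappa <= s <= 0.

Definition cont_on_dom (tau kappa : R) (f : R -> R) : Prop :=
  forall s, in_dom tau kappa s ->
  forall eps, 0 < eps -> exists delta, 0 < delta /\
    forall t, in_dom tau kappa t -> Rabs (t - s) < delta -> Rabs (f t - f s) < eps.

Definition inC (tau kappa : R) (phi : state) : Prop :=
  cont_on_dom tau kappa (phS phi) /\ cont_on_dom tau kappa (phI phi) /\
  cont_on_dom tau kappa (phQ phi) /\
  forall s, in_dom tau kappa s -> phS phi s + phI phi s + phQ phi s = 1.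

Definition hat (a b c : R) : state :=
  mkState (fun _ => a) (fun _ => b) (fun _ => c).

Definition eqC (tau kappa : R) (phi psi : state) : Prop :=
  forall s, in_dom tau kappa s ->
    phS phi s = phS psi s /\ phI phi s = phI psi s /\ phQ phi s = phQ psi s.

Definition inE0 (tau kappa : R) (phi : state) : Prop :=
  inC tau kappa phi /\ exists a b c, eqC tau kappa phi (hat a b c) /\ b = 0.

Definition inEI (r eps tau kappa : R) (phi : state) : Prop :=
  inC tau kappa phi /\
  exists a b c, eqC tau kappa phi (hat a b c) /\ a = 1 / (r * (1 - eps)).

Definition Hfun (r kappa : R) (phi : state) : R :=
  1 - phS phi 0 - phI phi (- kappa)
    + RInt (fun s => (1 - r * phS phi s) * phI phi s) (- kappa) 0.

(* Main.v *)
Require Import Defs.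
From Stdlib Require Import Reals Lra.
From Coquelicot Require Import Coquelicot.
Open Scope R_scope.
Lemma Hconst r kappa tau phi a b c : 0 < kappa -> 0 < tau ->
  eqC tau kappa phi (hat a b c) ->
  Hfun r kappa phi = 1 - a - b + kappa * ((1 - r * a) * b).
Proof.
  intros hk ht E. unfold Hfun.
  destruct (E 0) as [E1 _]. unfold in_dom; lra.
  destruct (E (-kappa)) as [_ [E2 _]]. unfold in_dom; lra.
  rewrite E1, E2.
  rewrite (RInt_ext _ (fun _ => (1 - r * a) * b)).
  - rewrite RInt_const. simpl. unfold scal; simpl; unfold mult; simpl. lra.
  - intros x Hx. rewrite Rmin_left in Hx by lra. rewrite Rmax_right in Hx by lra.
    destruct (E x) as [F1 [F2 _]]. unfold in_dom; lra. rewrite F1, F2. reflexivity.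
Qed.

Lemma cont_const tau kappa (v : R) : cont_on_dom tau kappa (fun _ => v).
Proof.
  intros s _ e he. exists 1. split; [lra|]. intros t _ _.
  replace (v - v) with 0 by ring. rewrite Rabs_R0. exact he.
Qed.

Lemma inC_hat tau kappa a b c : a + b + c = 1 -> inC tau kappa (hat a b c).
Proof.
  intros H. split; [exact (cont_const tau kappa a)|]. split; [exact (cont_const tau kappa b)|]. split; [exact (cont_const tau kappa c)|]. intros s _. simpl. exact H.
Qed.

Lemma eqC_sum tau kappa phi a b c : 0 < kappa -> 0 < tau -> inC tau kappa phi ->
  eqC tau kappa phi (hat a b c) -> a + b + c = 1.
Proof.
  intros hk ht [_ [_ [_ HS]]] E.
  assert (D : in_dom tau kappa 0) by (unfold in_dom; lra).
  destruct (E 0 D) as [E1 [E2 E3]]. specialize (HS 0 D).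
  simpl in *. rewrite <- E1, <- E2, <- E3. exact HS.
Qed.

Theorem theorem7 (r kappa tau p q : R) :
  0 < r -> 0 < kappa -> 0 < tau -> 0 <= p <= 1 -> p * exp (- tau) < 1 ->
  let eps := p * exp (- tau) in
  let qc := 1 - (1 / r) * (1 / (1 - eps)) in
  let vS := 1 / (r * (1 - eps)) in
  let vI := (1 - eps) / (1 - eps + eps * kappa) * (qc - q) in
  let vQ := (eps * kappa) / (1 - eps + eps * kappa) * (qc - q) + q in
  (* (1)  F_q ∩ E_0 = { hat u(q) },  u(q) = (1-q, 0, q) *)
  (inC tau kappa (hat (1 - q) 0 q) /\
   forall phi : state, inC tau kappa phi ->
     (Hfun r kappa phi = q /\ inE0 tau kappa phi <->
      eqC tau kappa phi (hat (1 - q) 0 q))) /\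
  (* (2)  F_q ∩ E_I = { hat v(q) } *)
  (inC tau kappa (hat vS vI vQ) /\
   forall phi : state, inC tau kappa phi ->
     (Hfun r kappa phi = q /\ inEI r eps tau kappa phi <->
      eqC tau kappa phi (hat vS vI vQ))).
Proof.
  intros hr hk ht hp he eps qc vS vI vQ.
  assert (He0 : 0 <= eps) by (unfold eps; apply Rmult_le_pos; [lra| left; apply exp_pos]).
  assert (He1 : 0 < 1 - eps) by (unfold eps; lra).
  assert (HD : 0 < 1 - eps + eps * kappa) by nra.
  assert (Hsum : vS + vI + vQ = 1).
  { unfold vS, vI, vQ, qc. field. lra. }
  split; split.
  - apply inC_hat. ring.
  - intros phi HC. split.
    + intros [HH [_ [a [b [c [E Hb]]]]]]. subst b.
      pose proof (eqC_sum _ _ _ _ _ _ hk ht HC E) as S.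
      rewrite (Hconst r kappa tau phi a 0 c hk ht E) in HH.
      replace (1 - q) with a by lra. replace q with c by lra. exact E.
    + intros E. split.
      * rewrite (Hconst r kappa tau phi _ _ _ hk ht E). ring.
      * split; [exact HC|]. exists (1 - q), 0, q. split; [exact E|reflexivity].
  - apply inC_hat. exact Hsum.
  - intros phi HC. split.
    + intros [HH [_ [a [b [c [E Ha]]]]]].
      pose proof (eqC_sum _ _ _ _ _ _ hk ht HC E) as S.
      rewrite (Hconst r kappa tau phi a b c hk ht E) in HH.
      assert (Hb : b = vI).
      { subst a. fold vS in HH.
        assert (Hr : 1 - r * vS = - eps / (1 - eps)) by (unfold vS; field; lra).
        rewrite Hr in HH.
        assert (Hq : qc = 1 - vS) by (unfold qc, vS; field; lra).
        unfold vI. rewrite Hq, <- HH. field. lra. }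
      assert (Hc : c = vQ) by (fold vS in Ha; lra).
      fold vS in Ha. subst a b c. exact E.
    + intros E. split.
      * rewrite (Hconst r kappa tau phi _ _ _ hk ht E).
        unfold vS, vI, qc. field. split; lra.
      * split; [exact HC|]. exists vS, vI, vQ. split; [exact E|reflexivity].
Qed.
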